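(* Let $k\ge 2$, $n\ge1$, and let $L_n$, $\varphi$ and the weight $w$ be as in the context. For all $\mathbf a,\mathbf b\in L_n$ with $a_1=0$ and $b_1=k-1$, we have $w(\varphi(\mathbf a))<w(\varphi(\mathbf b))$.
   Context: $E=\{0,\dots,k-1\}$. For $\mathbf a\in E^m$, $w(\mathbf a)=a_1+\dots+a_m$, and $\mathcal B_t=\{\mathbf a\in E^n: w(\mathbf a)=t\}$. Let $g=\lfloor n(k-1)/2\rfloor$ and $C_i=\{\mathbf a\in E^n: a_1=i\}$. Define $L_n=(\mathcal B_0\cup\dots\cup\mathcal B_g)\cap(C_0\cup C_{k-1})$ if $n(k-1)$ is odd, and $L_n=((\mathcal B_0\cup\dots\cup\mathcal B_{g-1})\cap(C_0\cup C_{k-1}))\cup(\mathcal B_g\cap C_0)$ if $n(k-1)$ is even. For $a\in E$ let $\overline a=k-1-a$. Define $\varphi:L_n\to E^{n-1}$ by $\varphi(a_1,\dots,a_n)=(a_2,\dots,a_n)$ if $a_1=0$ and $\varphi(a_1,\dots,a_n)=(\overline{a}_2,\dots,\overline{a}_n)$ if $a_1=k-1$. *)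

(* Defs.v *)
From mathcomp Require Import all_boot.
Set Implicit Arguments. Unset Strict Implicit. Unset Printing Implicit Defensive.

(* E = {0,...,k-1} is 'I_k ; E^m is m.-tuple 'I_k. *)

Definition weight (k m : nat) (a : m.-tuple 'I_k) : nat := \sum_(x <- a) (x : nat).

(* first coordinate a_1 (as a nat); meaningful when m >= 1 *)
Definition first_coord (k m : nat) (a : m.-tuple 'I_k) : nat := head 0 (map (@nat_of_ord k) a).

Definition in_L (k n : nat) (a : n.-tuple 'I_k) : bool :=
  let g := (n * (k - 1))./2 in
  if odd (n * (k - 1)) then
    (weight a <= g) && ((first_coord a == 0) || (first_coord a == k - 1))
  else
    ((weight a < g) && ((first_coord a == 0) || (first_coord a == k - 1)))
    || ((weight a == g) && (first_coord a == 0)).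

(* phi : L_n -> E^(n-1); complement bar a = k-1-a is rev_ord *)
Definition phi (k n : nat) (a : n.-tuple 'I_k) : n.-1.-tuple 'I_k :=
  if first_coord a == 0 then behead_tuple a
  else map_tuple (@rev_ord k) (behead_tuple a).

(* Main.v *)
Require Import Defs.
From mathcomp Require Import all_boot.
From mathcomp Require Import zify.

Lemma sum_rev k (s : seq 'I_k) :
  \sum_(x <- map (@rev_ord k) s) (x : nat) + \sum_(x <- s) (x : nat) = size s * (k - 1).
Proof.
elim: s => [|x s IH]; first by rewrite !big_nil.
rewrite /= !big_cons /= mulSn -IH.
have := ltn_ord x. lia.
Qed.

Lemma weight_cons k n (a : n.-tuple 'I_k) :
  weight a = first_coord a + weight (behead_tuple a).
Proof.
case: a => [[|x s] /= Hs]; rewrite /weight /first_coord /=.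
  by rewrite !big_nil.
by rewrite big_cons.
Qed.

Theorem lemma1 (k n : nat) (hk : 2 <= k) (hn : 1 <= n)
  (a b : n.-tuple 'I_k) :
  in_L a -> in_L b -> first_coord a = 0 -> first_coord b = k - 1 ->
  weight (phi a) < weight (phi b).
Proof.
move=> La Lb fa fb.
have Hsum : weight a + weight b < n * (k - 1).
  move: La Lb; rewrite /in_L fa fb.
  have kk : (k - 1 == 0) = false by apply/eqP; lia.
  rewrite kk eqxx /= ?orbF ?andbT ?andbF ?orbF.
  case: ifP => Hodd.
    move=> Ha Hb. have := odd_double_half (n * (k - 1)). rewrite Hodd. lia.
  move=> Ha Hb. have := odd_double_half (n * (k - 1)). rewrite Hodd.
  move: Ha => /orP [] Ha; lia.
rewrite /phi fa fb eqxx.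
have kk : (k - 1 == 0) = false by apply/eqP; lia.
rewrite kk.
move: Hsum; rewrite (@weight_cons _ _ a) (@weight_cons _ _ b) fa fb.
have := @sum_rev _ (behead_tuple b).
rewrite /weight /= size_behead size_tuple.
have : n.-1 * (k - 1) + (k - 1) = n * (k - 1).
  by case: n hn {La Lb a fa b fb} => // n _ /=; rewrite mulSn addnC.
lia.
Qed.
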